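(* Let $\mathcal{G}$ be a MAG on vertex set $V$, let $W\subseteq V$ and let $a,b\in W$. Let $C\subseteq W$ and $E\subseteq V\setminus W$ be such that $a,b\notin C$ and $a$ and $b$ are m-separated by $C\cup E$ in $\mathcal{G}$. Then $a$ and $b$ are m-separated by $C$ in the induced subgraph $\mathcal{G}_W$.
   Context: A MAG is an acyclic directed mixed graph (directed and bidirected edges, no directed cycles) with $\mathrm{sib}(v)\cap\mathrm{an}(v)=\emptyset$ for all $v$ and in which every nonadjacent pair of vertices is m-separated by some set. A path is m-connecting given $C$ if every non-endpoint collider (both adjacent edges on the path have an arrowhead at it) lies in $\mathrm{an}(C)$ and every other non-endpoint vertex lies outside $C$; $a$ and $b$ are m-separated by $C$ if there is no m-connecting path between them given $C$. $\mathcal{G}_W$ is the induced subgraph on $W$ (ancestors computed in $\mathcal{G}_W$). *)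

(* Defs.v *)
From mathcomp Require Import all_boot.
Set Implicit Arguments. Unset Strict Implicit. Unset Printing Implicit Defensive.

Section MixedGraphs.
Variable V : finType.

(* A directed mixed graph: [d x y] means x -> y ; [bi x y] means x <-> y. *)

Definition adj (d bi : rel V) : rel V :=
  fun x y => [|| d x y, d y x, bi x y | bi y x].

(* ancestors: x \in an(y) iff there is a directed path x -> ... -> y
   (reflexive, as usual) *)
Definition anc (d : rel V) (x y : V) : bool := connect d x y.

Definition in_anset (d : rel V) (v : V) (C : {set V}) : bool :=
  [exists c in C, anc d v c].

Definition arrow_at (d bi : rel V) (x y : V) : bool := d x y || bi x y || bi y x.

Definition is_path (d bi : rel V) (a b : V) (p : seq V) : bool :=
  [&& path (adj d bi) a p, uniq (a :: p) & last a p == b].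

Definition m_connecting (d bi : rel V) (C : {set V}) (a : V) (p : seq V) : Prop :=
  forall i, 0 < i < size p ->
    let s := a :: p in
    let u := nth a s i.-1 in
    let v := nth a s i in
    let w := nth a s i.+1 in
    if arrow_at d bi u v && arrow_at d bi w v
    then in_anset d v C
    else v \notin C.

Definition m_separated (d bi : rel V) (a b : V) (C : {set V}) : Prop :=
  ~ (exists p : seq V, is_path d bi a b p /\ m_connecting d bi C a p).

Definition is_MAG (d bi : rel V) : Prop :=
  [/\
      (forall x y, bi x y = bi y x),
      (forall x, ~~ bi x x),
      (* no directed cycles (includes no self loops) *)
      (forall x y, d x y -> ~~ anc d y x),
      (forall x v, bi x v -> ~~ anc d x v) &
      (forall x y, x != y -> ~~ adj d bi x y ->
         exists C : {set V}, m_separated d bi x y C)].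

(* Induced subgraph on W, represented on the same vertex type: only edges
   with both endpoints in W are kept (so paths, ancestors etc. of G_W are
   computed within W). *)
Definition ind_d (W : {set V}) (d : rel V) : rel V :=
  fun x y => [&& x \in W, y \in W & d x y].
Definition ind_bi (W : {set V}) (bi : rel V) : rel V :=
  fun x y => [&& x \in W, y \in W & bi x y].

End MixedGraphs.

(* Main.v *)
Require Import Defs.
From mathcomp Require Import all_boot.

Lemma adj_ind_W (V : finType) (d bi : rel V) (W : {set V}) x y :
  adj (ind_d W d) (ind_bi W bi) x y -> (x \in W) && (y \in W) && adj d bi x y.
Proof.
rewrite /adj /ind_d /ind_bi.
by case: (x \in W); case: (y \in W); rewrite /= ?orbF //.
Qed.

Lemma path_ind_W (V : finType) (d bi : rel V) (W : {set V}) (a : V) (p : seq V) :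
  a \in W -> path (adj (ind_d W d) (ind_bi W bi)) a p ->
  all (mem W) (a :: p) && path (adj d bi) a p.
Proof.
elim: p a => [|x p IH] a aW /=; first by rewrite aW.
move=> /andP[/adj_ind_W /andP[/andP[_ xW] hadj] hp].
have /andP[h1 h2] := IH x xW hp.
move: h1 => /= /andP[_ h1].
by rewrite aW xW h1 hadj h2.
Qed.

Theorem propositionB2 (V : finType) (d bi : rel V) (W C E : {set V}) (a b : V) :
  is_MAG d bi ->
  a \in W -> b \in W ->
  C \subset W -> E \subset ~: W ->
  a \notin C -> b \notin C ->
  m_separated d bi a b (C :|: E) ->
  m_separated (ind_d W d) (ind_bi W bi) a b C.
Proof.
move=> _ aW bW CW EW _ _ hsep [p [hpath hmc]]; apply: hsep; exists p.
move: hpath => /and3P[hp hu hl].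
have /andP[/allP allW hp'] := @path_ind_W V d bi W a p aW hp.
split; first by rewrite /is_path hp' hu hl.
have nthW : forall i, nth a (a :: p) i \in W.
  move=> i; case: (ltnP i (size (a :: p))) => hi.
    by apply: allW; apply: mem_nth.
  by rewrite nth_default.
move=> i hi /=; have := hmc i hi => /=.
have arrE : forall x y, x \in W -> y \in W ->
    arrow_at (ind_d W d) (ind_bi W bi) x y = arrow_at d bi x y.
  by move=> x y xW yW; rewrite /arrow_at /ind_d /ind_bi xW yW.
rewrite !arrE ?nthW //.
case: ifP => _.
  case/existsP => c /andP[cC hc]; apply/existsP; exists c.
  rewrite inE cC /=; move: hc; rewrite /anc; apply: connect_sub => x y.
  by case/and3P => _ _ hxy; apply: connect1.
move=> hnC; rewrite inE negb_or hnC /=.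
apply/negP => hE; have := subsetP EW _ hE; rewrite inE.
by have := nthW i => ->.
by have := nthW i.+1.
Qed.
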